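(* Let $n\ge 1$, $k\in\{1,\ldots,n\}$, $r\in\mathbb{R}$ and $x^0\in\mathbb{R}^n$. Let $\kappa\subseteq\{1,\ldots,n\}$ with $|\kappa|=k$ be a set of indices of $k$ largest entries of $x^0$ (ties broken arbitrarily), and let $[k]\in\kappa$ be an index such that $x^0_{[k]}$ is the $k$-th largest entry of $x^0$ (i.e. $x^0_{[k]}=\min_{i\in\kappa}x^0_i$). Then the unique minimizer of $\tfrac12\|x-x^0\|_2^2$ over $\mathcal{B}^r_{(k)}:=\{x\in\mathbb{R}^n:\ \sum_{i=1}^k x^{\downarrow}_i\le r\}$ coincides with the unique minimizer of $\tfrac12\|x-x^0\|_2^2$ over the polyhedron $$\Big\{x\in\mathbb{R}^n:\ \sum_{i\in\kappa}x_i\le r,\ \ x_i\ge x_{[k]}\ \forall i\in\kappa,\ \ x_j\le x_{[k]}\ \forall j\notin\kappa\Big\}.$$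
   Context: For $x\in\mathbb{R}^n$, $x^{\downarrow}$ denotes the nonincreasing rearrangement of $x$, so $\sum_{i=1}^k x^{\downarrow}_i$ is the sum of the $k$ largest entries of $x$. *)

(* Defs.v *)
From mathcomp Require Import all_boot all_order all_algebra.
From mathcomp Require Import reals.
Set Implicit Arguments. Unset Strict Implicit. Unset Printing Implicit Defensive.
Import Order.TTheory GRing.Theory Num.Theory.
Local Open Scope ring_scope.

(* Vectors of R^n are row vectors 'rV[R]_n, indexed by 'I_n = {0,...,n-1}. *)

Definition decr_rearr (R : realType) (n : nat) (x : 'rV[R]_n) : seq R :=
  sort (fun a b : R => b <= a) [seq x ord0 i | i <- enum 'I_n].

Definition topk_sum (R : realType) (n k : nat) (x : 'rV[R]_n) : R :=
  \sum_(i < k) (decr_rearr x)`_i.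

Definition half_sqdist (R : realType) (n : nat) (x x0 : 'rV[R]_n) : R :=
  2^-1 * \sum_(i < n) (x ord0 i - x0 ord0 i) ^+ 2.

Definition is_proj_min (R : realType) (n : nat) (S : 'rV[R]_n -> Prop)
    (x0 x : 'rV[R]_n) : Prop :=
  S x /\ forall y, S y -> half_sqdist x x0 <= half_sqdist y x0.

Definition topk_ball (R : realType) (n k : nat) (r : R) (x : 'rV[R]_n) : Prop :=
  topk_sum k x <= r.

(* the polyhedron determined by kappa and the index p = [k] *)
Definition kappa_polyhedron (R : realType) (n : nat) (r : R)
    (kappa : {set 'I_n}) (p : 'I_n) (x : 'rV[R]_n) : Prop :=
  [/\ \sum_(i in kappa) x ord0 i <= r,
      (forall i, i \in kappa -> x ord0 p <= x ord0 i) &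
      (forall j, j \notin kappa -> x ord0 j <= x ord0 p)].

(* Main.v *)
Require Import Defs.
From mathcomp Require Import all_boot all_order all_algebra.
From mathcomp Require Import reals.
From mathcomp Require Import fingroup perm.
From mathcomp Require Import ring lra.
Import Order.TTheory GRing.Theory Num.Theory.

Local Open Scope ring_scope.
Section Comb.
Variables (R : realType) (n : nat).
Implicit Types (y : 'rV[R]_n) (S : {set 'I_n}).

Definition topset y S := forall i j, i \in S -> j \notin S -> y ord0 j <= y ord0 i.

Lemma sum_le_card y (A B : {set 'I_n}) : #|A| = #|B| ->
  (forall a b, a \in A -> b \in B -> y ord0 a <= y ord0 b) ->
  \sum_(i in A) y ord0 i <= \sum_(i in B) y ord0 i.
Proof.
move=> cAB hAB.
case: (set_0Vmem B) => [B0 | [b0 b0B]].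
  have A0 : A = set0 by apply/eqP; rewrite -cards_eq0 cAB B0 cards0.
  by rewrite A0 B0 !big_set0.
have [bm bmB bmmin] := @arg_minP _ R _ b0 (fun i => i \in B) (fun i => y ord0 i) b0B.
apply: (@le_trans _ _ (\sum_(i in A) y ord0 bm)).
  by apply: ler_sum => a aA; apply: hAB.
rewrite sumr_const cAB -sumr_const.
by apply: ler_sum => b bB; apply: bmmin.
Qed.

Lemma topset_le y S0 S : topset y S0 -> #|S| = #|S0| ->
  \sum_(i in S) y ord0 i <= \sum_(i in S0) y ord0 i.
Proof.
move=> tS0 cS.
rewrite (big_setID S0) [X in _ <= X](big_setID S) /= setIC lerD2l.
apply: sum_le_card.
  by rewrite !cardsD setIC cS.
move=> a b; rewrite !inE => /andP[aS0 aS] /andP[bS bS0].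
exact: tS0.
Qed.

Lemma topset_eq y S S' : topset y S -> topset y S' -> #|S| = #|S'| ->
  \sum_(i in S) y ord0 i = \sum_(i in S') y ord0 i.
Proof.
move=> tS tS' c; apply/le_anti/andP; split; first exact: topset_le.
exact: topset_le.
Qed.


Lemma topk_exists y k : (k <= n)%N ->
  exists S0, [/\ topset y S0, #|S0| = k & topk_sum k y = \sum_(i in S0) y ord0 i].
Proof.
move=> kn.
pose leT := fun i j : 'I_n => y ord0 j <= y ord0 i.
pose s := sort leT (enum 'I_n).
have dE : decr_rearr y = map (y ord0) s.
  by rewrite /decr_rearr /s (map_sort (leT' := leT) (leT := fun a b : R => b <= a)).
have ss : size s = n by rewrite size_sort size_enum_ord.
have us : uniq s by rewrite sort_uniq enum_uniq.
have ut : uniq (take k s) by apply: take_uniq.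
have st : size (take k s) = k by rewrite size_take ss; case: ltngtP kn.
exists [set j in take k s]; split.
- have srt : sorted leT s.
    apply: sort_sorted => i j; rewrite /leT; exact: le_total.
  have tr : transitive leT by move=> a b c; rewrite /leT => h1 h2; exact: le_trans h2 h1.
  have hs : s = take k s ++ drop k s by rewrite cat_take_drop.
  move: srt; rewrite (sorted_pairwise tr) {1}hs pairwise_cat.
  move=> /and3P[/allrelP hall _ _] i j; rewrite !inE => hi hj.
  have : j \in s by rewrite mem_sort mem_enum.
  rewrite {1}hs mem_cat (negbTE hj) /= => hjd.
  exact: hall.
- by rewrite cardsE; move/card_uniqP: ut => ->.
- rewrite /topk_sum dE.
  rewrite (eq_bigl (fun j => j \in take k s)); last by move=> j; rewrite inE.
  rewrite -(big_uniq _ ut) /=.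
  rewrite -(big_map (y ord0) xpredT (fun x => x)) map_take.
  rewrite (big_nth 0) size_take size_map ss.
  have -> : (if (k < n)%N then k else n) = k by case: ltngtP kn.
  rewrite big_mkord; apply: eq_bigr => i _.
  by rewrite nth_take.
Qed.

Lemma topk_topset y S k : (k <= n)%N -> topset y S -> #|S| = k ->
  topk_sum k y = \sum_(i in S) y ord0 i.
Proof.
move=> kn tS cS; have [S0 [t0 c0 ->]] := topk_exists y k kn.
by apply: topset_eq => //; rewrite c0 cS.
Qed.

Lemma topk_ge y S k : (k <= n)%N -> #|S| = k ->
  \sum_(i in S) y ord0 i <= topk_sum k y.
Proof.
move=> kn cS; have [S0 [t0 c0 ->]] := topk_exists y k kn.
by apply: topset_le => //; rewrite c0 cS.
Qed.

Definition mid (x y : 'rV[R]_n) : 'rV[R]_n := \row_i ((x ord0 i + y ord0 i) / 2).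

Lemma sum_mid x y (S : {set 'I_n}) :
  \sum_(i in S) mid x y ord0 i = (\sum_(i in S) x ord0 i + \sum_(i in S) y ord0 i) / 2.
Proof.
rewrite -big_split /= mulr_suml; apply: eq_bigr => i _; by rewrite mxE.
Qed.

Lemma topk_mid x y k r : (k <= n)%N -> topk_sum k x <= r -> topk_sum k y <= r ->
  topk_sum k (mid x y) <= r.
Proof.
move=> kn hx hy; have [S0 [t0 c0 ->]] := topk_exists (mid x y) k kn.
rewrite sum_mid.
have h1 := topk_ge x S0 k kn c0; have h2 := topk_ge y S0 k kn c0.
lra.
Qed.

Lemma hsd_mid x y a :
  half_sqdist (mid x y) a = (half_sqdist x a + half_sqdist y a) / 2
     - (\sum_(i < n) (x ord0 i - y ord0 i)^+2) / 8.
Proof.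
rewrite /half_sqdist.
have -> : \sum_(i < n) (mid x y ord0 i - a ord0 i) ^+ 2 =
   \sum_(i < n) ((x ord0 i - a ord0 i)^+2 / 2 + (y ord0 i - a ord0 i)^+2 / 2
                  - (x ord0 i - y ord0 i)^+2 / 4).
  apply: eq_bigr => i _; rewrite mxE.
  set u := x ord0 i; set v := y ord0 i; set w := a ord0 i.
  by rewrite !expr2; field.
rewrite big_split /= sumrN big_split /= -!mulr_suml.
set A := \sum_(i < n) _; set B := \sum_(i < n) _; set C := \sum_(i < n) _.
by field.
Qed.

Lemma uniq_min (S : 'rV[R]_n -> Prop) a x y :
  (forall u v, S u -> S v -> S (mid u v)) ->
  is_proj_min S a x -> is_proj_min S a y -> y = x.
Proof.
move=> Smid [Sx hx] [Sy hy].
have h1 := hx _ Sy; have h2 := hy _ Sx.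
have h3 := hx _ (Smid _ _ Sx Sy).
rewrite hsd_mid in h3.
have D0 : 0 <= \sum_(i < n) (x ord0 i - y ord0 i)^+2.
  by apply: sumr_ge0 => i _; exact: sqr_ge0.
have DE : \sum_(i < n) (x ord0 i - y ord0 i)^+2 = 0 by lra.
have := psumr_eq0P (fun i _ => sqr_ge0 (x ord0 i - y ord0 i)) DE.
move=> h; apply/rowP => i; apply/eqP; rewrite eq_sym -subr_eq0 -sqrf_eq0.
by rewrite h.
Qed.

Definition swapv (y : 'rV[R]_n) (i j : 'I_n) : 'rV[R]_n :=
  \row_l y ord0 (tperm i j l).

Lemma swapv_topset y i j S : topset y S ->
  topset (swapv y i j) (tperm i j @^-1: S).
Proof.
move=> tS a b; rewrite !inE !mxE => ha hb; exact: tS.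
Qed.

Lemma swapv_card i j S : #|tperm i j @^-1: S| = #|S|.
Proof. by rewrite card_preimset //; exact: perm_inj. Qed.

Lemma swapv_sum y i j S :
  \sum_(l in tperm i j @^-1: S) swapv y i j ord0 l = \sum_(l in S) y ord0 l.
Proof.
rewrite [RHS](reindex_inj (@perm_inj _ (tperm i j))) /=.
by apply: eq_big => l; rewrite ?inE // mxE.
Qed.

Lemma sum2 (F : 'I_n -> R) i j : i != j ->
  \sum_l F l = F i + F j + \sum_(l | (l != i) && (l != j)) F l.
Proof.
move=> ij; have ji : j != i by rewrite eq_sym.
rewrite (bigD1 i) //= (bigD1 j) /= ?ji // addrA.
by congr (_ + _); apply: eq_bigl => l; rewrite andbC.
Qed.

Lemma sum_diff2 (F G : 'I_n -> R) i j : i != j ->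
  (forall l, l != i -> l != j -> F l = G l) ->
  \sum_l F l - \sum_l G l = F i + F j - G i - G j.
Proof.
move=> ij hFG.
rewrite (@sum2 F i j ij) (@sum2 G i j ij).
rewrite (eq_bigr (fun l => G l)); first by ring.
by move=> l /andP[li lj]; apply: hFG.
Qed.

Lemma swapv_hsd y (a : 'rV[R]_n) i j :
  (y ord0 i - y ord0 j) * (a ord0 i - a ord0 j) <= 0 ->
  half_sqdist (swapv y i j) a <= half_sqdist y a.
Proof.
move=> h.
have [->|ij] := eqVneq i j.
  suff -> : swapv y j j = y by [].
  by apply/rowP => l; rewrite mxE tperm1 perm1.
rewrite -subr_le0 /half_sqdist -mulrBr.
rewrite (@sum_diff2 (fun l => (swapv y i j ord0 l - a ord0 l) ^+ 2) (fun l => (y ord0 l - a ord0 l) ^+ 2) i j ij).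
  rewrite /swapv !mxE tpermL tpermR.
  set yi := y ord0 i in h *; set yj := y ord0 j in h *; set ai := a ord0 i in h *; set aj := a ord0 j in h *.
  nra.
by move=> l li lj; rewrite /swapv mxE tpermD // eq_sym.
Qed.

Lemma rearr (a : 'rV[R]_n) (K : {set 'I_n}) : topset a K ->
  forall m y S0, #|S0 :\: K| = m -> topset y S0 -> #|S0| = #|K| ->
  exists y', [/\ topset y' K,
     \sum_(l in K) y' ord0 l = \sum_(l in S0) y ord0 l &
     half_sqdist y' a <= half_sqdist y a].
Proof.
move=> tK; elim=> [|m IH] y S0 cm tS0 cS0.
  have sub : S0 \subset K by rewrite -setD_eq0 -cards_eq0 cm.
  have eS : S0 = K by apply/eqP; rewrite eqEcard sub cS0 leqnn.
  by subst S0; exists y; split.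
have /card_gt0P [j hj] : (0 < #|S0 :\: K|)%N by rewrite cm.
have cKS : #|K :\: S0| = m.+1.
  by rewrite cardsD setIC -cS0 -cardsD cm.
have /card_gt0P [i hi] : (0 < #|K :\: S0|)%N by rewrite cKS.
move: (hi) (hj); rewrite !inE => /andP[iS0 iK] /andP[jK jS0].
have ij : i != j by apply: contraNneq jK => <-.
have e2 : (tperm i j @^-1: S0) :\: K = (S0 :\: K) :\ j.
  apply/setP => l; rewrite !inE.
  have [->|li] := eqVneq l i.
    by rewrite tpermL iK (negbTE iS0) !andbF.
  have [->|lj] := eqVneq l j.
    by rewrite tpermR (negbTE iS0) andbF.
  by rewrite tpermD // eq_sym.
have c2 : #|(tperm i j @^-1: S0) :\: K| = m.
  by rewrite e2; have := cardsD1 j (S0 :\: K); rewrite hj cm add1n; case.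
have [y' [t' s' d']] := IH (swapv y i j) _ c2 (swapv_topset y i j S0 tS0)
   (etrans (swapv_card i j S0) cS0).
exists y'; split => //; first by rewrite s' swapv_sum.
apply: (le_trans d'); apply: swapv_hsd.
have h1 : y ord0 i <= y ord0 j by apply: tS0.
have h2 : a ord0 j <= a ord0 i by apply: tK.
nra.
Qed.

Lemma preim_stable (p q : 'I_n) (K : {set 'I_n}) : p \in K -> q \in K ->
  tperm p q @^-1: K = K.
Proof.
move=> pK qK; apply/setP => l; rewrite !inE.
have [->|lp] := eqVneq l p; first by rewrite tpermL pK qK.
have [->|lq] := eqVneq l q; first by rewrite tpermR pK qK.
by rewrite tpermD // eq_sym.
Qed.

Lemma B_to_P (a : 'rV[R]_n) (K : {set 'I_n}) p k r :
  (k <= n)%N -> #|K| = k -> topset a K -> p \in K ->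
  (forall i, i \in K -> a ord0 p <= a ord0 i) ->
  forall y, topk_sum k y <= r ->
  exists y', kappa_polyhedron r K p y' /\ half_sqdist y' a <= half_sqdist y a.
Proof.
move=> kn cK tK pK pmin y hy.
have [S0 [t0 c0 e0]] := topk_exists y k kn.
have [y1 [t1 s1 d1]] := @rearr a K tK _ y S0 (erefl _) t0 (etrans c0 (esym cK)).
have [q qK qmin] := @arg_minP _ R _ p (fun i => i \in K) (fun i => y1 ord0 i) pK.
exists (swapv y1 p q); split.
  split.
  - rewrite -(preim_stable p q K pK qK) swapv_sum s1 -e0 //.
  - move=> i iK; rewrite /swapv !mxE tpermL; apply: qmin.
    have := iK; rewrite -{1}(preim_stable p q K pK qK) inE; done.
  - move=> j jK; rewrite /swapv !mxE tpermL tpermD.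
    + by apply: t1.
    + by apply: contraNneq jK => <-.
    + by apply: contraNneq jK => <-.
apply: (le_trans _ d1); apply: swapv_hsd.
have h1 : y1 ord0 q <= y1 ord0 p by apply: qmin.
have h2 : a ord0 p <= a ord0 q by apply: pmin.
nra.
Qed.
End Comb.
Arguments mid {R n}.
Arguments sum_mid {R n}.
Arguments topk_mid {R n}.
Arguments uniq_min {R n}.
Arguments B_to_P {R n}.

From mathcomp Require Import all_classical all_reals all_analysis.
Import Order.TTheory GRing.Theory Num.Theory.
Import numFieldNormedType.Exports.

Section Ex.
Local Open Scope classical_set_scope.

Variables (R : realType) (n : nat).

Lemma coordD_cont (i : 'I_n) (c : R) :
  continuous (fun x : 'rV[R]_n => x ord0 i - c).
Proof.
move=> x; apply: continuousB; first exact: coord_continuous.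
exact: cst_continuous.
Qed.

Lemma hsd_cont (x0 : 'rV[R]_n) : continuous (fun x => half_sqdist x x0).
Proof.
move=> x; rewrite /half_sqdist.
have H : continuous (fun x : 'rV[R]_n => \sum_(i < n) (x ord0 i - x0 ord0 i)^+2).
  apply: (continuous_big (op := +%R) (x0 := 0) (P := xpredT)) =>[|i _ y]; first exact: add_continuous.
  exact: (continuous_comp (coordD_cont i (x0 ord0 i) y) (@exprn_continuous R 2 _)).
exact: (@continuousM _ _ (fun=> 2^-1) _ x (@cst_continuous _ _ _ x) (H x)).
Qed.
End Ex.

Section Ex2.
Local Open Scope classical_set_scope.
Variables (R : realType) (n : nat).

Lemma term_le_sum (x x0 : 'rV[R]_n) i :
  (x ord0 i - x0 ord0 i)^+2 <= 2 * half_sqdist x x0.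
Proof.
rewrite /half_sqdist mulrA divff ?pnatr_eq0 // mul1r.
rewrite (bigD1 i) //= lerDl; apply: sumr_ge0 => j _; exact: sqr_ge0.
Qed.

Lemma exists_min (S : set 'rV[R]_n) (x0 z0 : 'rV[R]_n) :
  closed S -> S z0 -> exists x, is_proj_min S x0 x.
Proof.
move=> Scl Sz0.
pose c := half_sqdist z0 x0.
pose K := S `&` [set x | half_sqdist x x0 <= c].
have Kcl : closed K.
  apply: closedI => //.
  apply: (@preimage_closed _ _ (fun x => half_sqdist x x0) [set y | y <= c]).
    by move=> y _; exact: hsd_cont.
  exact: closed_le.
pose D := 2 * c + 1.
have Kc : compact K.
  have Bc := @rV_compact _ n (fun i => `[x0 ord0 i - D, x0 ord0 i + D]%classic) (fun i => @segment_compact R _ _).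
  apply: (subclosed_compact Kcl Bc).
  move=> v [_ /= hv] i /=.
  have h1 := term_le_sum v x0 i.
  set d := v ord0 i - x0 ord0 i in h1.
  have hd : `|d| <= D.
    rewrite /D; have : `|d| <= d ^+ 2 + 1.
      case: (lerP `|d| 1) => h.
        by apply: (le_trans h); rewrite lerDr sqr_ge0.
      rewrite -real_normK ?num_real //; apply: ler_wpDr => //.
      by rewrite expr2 ler_peMl // ltW.
    move=> h; apply: (le_trans h); rewrite lerD2r.
    by apply: (le_trans h1); rewrite ler_pM2l.
  move: hd; rewrite ler_norml => /andP[h2 h3].
  rewrite /d in h2 h3; rewrite in_itv /=; apply/andP; split; lra.
have K0 : K !=set0 by exists z0; split => //=.
have [xm xmK xmmin] := EVT_min_rV K0 Kc (continuous_subspaceT (@hsd_cont R n x0)).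
move: (xmK); rewrite inE => -[Sxm /= xmc].
exists xm; split => // y Sy.
case: (lerP (half_sqdist y x0) c) => h.
  by apply: xmmin; rewrite inE.
by apply: (le_trans xmc); exact: ltW.
Qed.
End Ex2.
Arguments exists_min {R n}.


Section Final.
Local Open Scope classical_set_scope.
Variables (R : realType) (n : nat).

Lemma closed_le_fun (g : 'rV[R]_n -> R) c : continuous g -> closed [set x | g x <= c].
Proof.
move=> gc; apply: (@preimage_closed _ _ g [set y | y <= c]).
  by move=> y _; exact: gc.
exact: closed_le.
Qed.

Lemma closed_poly (r : R) (K : {set 'I_n}) p : closed (kappa_polyhedron r K p).
Proof.
have e : kappa_polyhedron r K p =
  [set x : 'rV[R]_n | \sum_(i in K) x ord0 i <= r] `&`
  ((\bigcap_(i in [set i | i \in K]) [set x : 'rV[R]_n | x ord0 p - x ord0 i <= 0]) `&`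
   (\bigcap_(j in [set j | j \notin K]) [set x : 'rV[R]_n | x ord0 j - x ord0 p <= 0])).
  apply/seteqP; split => x.
    case=> h1 h2 h3; split => //; split => i /= hi; rewrite subr_le0.
      exact: h2.
    exact: h3.
  case=> h1 [h2 h3]; split => //.
    by move=> i hi; rewrite -subr_le0; apply: h2.
  by move=> j hj; rewrite -subr_le0; apply: h3.
rewrite e; apply: closedI; last apply: closedI.
- apply: closed_le_fun.
  apply: (continuous_big (op := +%R) (x0 := 0) (P := fun i => i \in K)) => [|i _].
    exact: add_continuous.
  exact: coord_continuous.
- apply: closed_bigI => i _; apply: closed_le_fun => x.
  by apply: continuousB; exact: coord_continuous.
- apply: closed_bigI => i _; apply: closed_le_fun => x.
  by apply: continuousB; exact: coord_continuous.
Qed.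
End Final.

Theorem lemma2p1 (R : realType) (n k : nat) (r : R) (x0 : 'rV[R]_n)
    (kappa : {set 'I_n}) (p : 'I_n) :
  (1 <= n)%N -> (1 <= k <= n)%N ->
  #|kappa| = k ->
  (forall i j, i \in kappa -> j \notin kappa -> x0 ord0 j <= x0 ord0 i) ->
  p \in kappa ->
  (forall i, i \in kappa -> x0 ord0 p <= x0 ord0 i) ->
  exists xs : 'rV[R]_n,
    [/\ is_proj_min (topk_ball k r) x0 xs,
        (forall y, is_proj_min (topk_ball k r) x0 y -> y = xs),
        is_proj_min (kappa_polyhedron r kappa p) x0 xs &
        (forall y, is_proj_min (kappa_polyhedron r kappa p) x0 y -> y = xs)].
Proof.
move=> n1 /andP[k1 kn] cK tK pK pmin.
have midP : forall u v, kappa_polyhedron r kappa p u -> kappa_polyhedron r kappa p v ->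
    kappa_polyhedron r kappa p (mid u v).
  move=> u v [u1 u2 u3] [v1 v2 v3]; split.
  - rewrite sum_mid; lra.
  - move=> i iK; rewrite !mxE; have := u2 i iK; have := v2 i iK; lra.
  - move=> j jK; rewrite !mxE; have := u3 j jK; have := v3 j jK; lra.
have midB : forall u v : 'rV[R]_n, topk_ball k r u -> topk_ball k r v -> topk_ball k r (mid u v).
  move=> u v hu hv; have := topk_mid u v k r kn hu hv; rewrite /topk_ball; exact.
pose z0 : 'rV[R]_n := const_mx (r / k%:R).
have Pz0 : kappa_polyhedron r kappa p z0.
  split.
  - rewrite (eq_bigr (fun=> r / k%:R)); last by move=> i _; rewrite mxE.
    have kE : r / k%:R *+ k = r / k%:R * k%:R by rewrite mulr_natr.
    rewrite sumr_const cK kE divfK //.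
    by rewrite pnatr_eq0 -lt0n.
  - by move=> i _; rewrite !mxE.
  - by move=> i _; rewrite !mxE.
have [xs [Pxs xsmin]] := exists_min (kappa_polyhedron r kappa p) x0 z0 (@closed_poly R n r kappa p) Pz0.
have Bxs : topk_ball k r xs.
  case: Pxs => h1 h2 h3; rewrite /topk_ball.
  rewrite (@topk_topset R n xs kappa k kn) //.
  move=> i j iK jK; apply: (le_trans (h3 j jK)); exact: h2.
have minB : is_proj_min (topk_ball k r) x0 xs.
  split => // y By.
  have [y' [Py' d]] := B_to_P x0 kappa p k r kn cK tK pK pmin y By.
  exact: (le_trans (xsmin y' Py') d).
exists xs; split => //.
- by move=> y hy; apply: (uniq_min _ _ _ _ midB minB hy).
- by move=> y hy; apply: (uniq_min _ _ _ _ midP (conj Pxs xsmin) hy).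
Qed.
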